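(* Let $(X,\tau_X,\partial_X)$ be a Polish topometric space, $(Y,\tau_Y)$ a Polish space, and $f\colon(Y,\tau_Y)\to(X,\tau_X)$ a continuous map with $\tau_X$-dense image such that for every open $U\subseteq Y$ and every $\varepsilon>0$ the set $(fU)_\varepsilon\subseteq X$ is open. Assume also that for every open $V\subseteq X$ and every $\varepsilon>0$ the set $(V)_\varepsilon$ is open. Then for every co-meagre $A\subseteq Y$, the $\partial_X$-closure $\overline{f(A)}^{\partial_X}$ is co-meagre in $X$.
   Context: A topometric space is a triple $(X,\tau,\partial)$ where $\tau$ is a topology and $\partial$ a metric whose topology refines $\tau$ and which is $\tau$-lower semi-continuous ($\{(x,y)\colon\partial(x,y)\le r\}$ is closed in $(X,\tau)^2$ for every $r$); it is Polish if $\tau$ is Polish. For $B\subseteq X$, $(B)_\varepsilon=\{x\colon\partial_X(x,B)<\varepsilon\}$. *)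

(* Defs.v *)
From HB Require Import structures.
From mathcomp Require Import all_boot all_order all_algebra.
From mathcomp Require Import all_classical all_reals all_analysis.
Set Implicit Arguments. Unset Strict Implicit. Unset Printing Implicit Defensive.
Import Order.TTheory GRing.Theory Num.Theory.
Local Open Scope classical_set_scope.
Local Open Scope ring_scope.

Definition is_metric (R : realType) (T : Type) (d : T -> T -> R) : Prop :=
  [/\ forall x y, 0 <= d x y,
      forall x y, d x y = 0 <-> x = y,
      forall x y, d x y = d y x &
      forall x y z, d x z <= d x y + d y z].

Definition dball (R : realType) (T : Type) (d : T -> T -> R) (x : T) (e : R) : set T :=
  [set y | d x y < e].

Definition dopen (R : realType) (T : Type) (d : T -> T -> R) (A : set T) : Prop :=
  forall x, A x -> exists2 e : R, 0 < e & dball d x e `<=` A.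

Definition dcauchy (R : realType) (T : Type) (d : T -> T -> R) (u : nat -> T) : Prop :=
  forall e : R, 0 < e -> exists N : nat, forall m n : nat,
    (N <= m)%N -> (N <= n)%N -> d (u m) (u n) < e.

Definition dconverges (R : realType) (T : Type) (d : T -> T -> R) (u : nat -> T) : Prop :=
  exists x : T, forall e : R, 0 < e -> exists N : nat, forall n : nat,
    (N <= n)%N -> d (u n) x < e.

Definition polish (R : realType) (T : topologicalType) : Prop :=
  (exists D : set T, countable D /\ dense D) /\
  (exists rho : T -> T -> R,
     [/\ is_metric rho,
         (forall A : set T, open A <-> dopen rho A) &
         (forall u : nat -> T, dcauchy rho u -> dconverges rho u)]).

(* Topometric space (X, tau, d): d is a metric whose topology refines tau
   and d is tau-lower semicontinuous. *)
Definition topometric (R : realType) (X : topologicalType) (d : X -> X -> R) : Prop :=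
  [/\ is_metric d,
      (forall U : set X, open U -> dopen d U) &
      (forall r : R, closed [set p : X * X | d p.1 p.2 <= r])].

(* (B)_e = {x | d(x,B) < e} = {x | exists b in B, d x b < e} *)
Definition thicken (R : realType) (X : Type) (d : X -> X -> R) (B : set X) (e : R) : set X :=
  [set x | exists2 b, B b & d x b < e].

Definition dclosure (R : realType) (X : Type) (d : X -> X -> R) (B : set X) : set X :=
  [set x | forall e : R, 0 < e -> exists2 b, B b & d x b < e].

Definition nowhere_dense (T : topologicalType) (A : set T) : Prop :=
  interior (closure A) = set0.

Definition meagre (T : topologicalType) (A : set T) : Prop :=
  exists F : nat -> set T, (forall n, nowhere_dense (F n)) /\ A `<=` \bigcup_n F n.

Definition comeagre (T : topologicalType) (A : set T) : Prop := meagre (~` A).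

(* Main.v *)
Require Import Defs.
From HB Require Import structures.
From mathcomp Require Import all_boot all_order all_algebra.
From mathcomp Require Import all_classical all_reals all_analysis.
Import Order.TTheory GRing.Theory Num.Theory.
Local Open Scope classical_set_scope.
Local Open Scope ring_scope.

Lemma nd_diff (T : topologicalType) (S M : set T) : open M ->
  (forall N, open N -> N `&` S !=set0 -> N `&` M !=set0) -> nowhere_dense (S `\` M).
Proof.
move=> oM H; rewrite /nowhere_dense; apply/seteqP; split=> // p /= Pp.
rewrite /interior /= nbhsE in Pp; case: Pp => B [oB Bp] BC.
have [q [[Sq Mq] Bq]] := BC p Bp B (open_nbhs_nbhs (conj oB Bp)).
have [q' [Bq' Mq']] := H B oB (ex_intro _ q (conj Bq Sq)).
have [z [[_ nMz] Mz]] := BC q' Bq' M (open_nbhs_nbhs (conj oM Mq')).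
by [].
Qed.

Lemma nd_sub (T : topologicalType) (A B : set T) : A `<=` B -> nowhere_dense B -> nowhere_dense A.
Proof.
move=> AB; rewrite /nowhere_dense => hB; apply/seteqP; split=> // p Pp.
by rewrite -hB; apply: interiorS Pp; apply: closureS.
Qed.

Lemma nd0 (T : topologicalType) : nowhere_dense (@set0 T).
Proof. by rewrite /nowhere_dense closure0 interior0. Qed.

Lemma meagre_sub (T : topologicalType) (A B : set T) : A `<=` B -> meagre B -> meagre A.
Proof. by move=> AB [F [hF BF]]; exists F; split => //; apply: subset_trans BF. Qed.

Lemma meagre_nd (T : topologicalType) (A : set T) : nowhere_dense A -> meagre A.
Proof.
move=> hA; exists (fun n => if n is 0%N then A else set0); split.
  by case=> [|n] //; apply: nd0.
by move=> x Ax; exists 0%N.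
Qed.

Lemma meagre_bigcup (T : topologicalType) (I : countType) (S : I -> set T) :
  (forall i, meagre (S i)) -> meagre (\bigcup_i S i).
Proof.
move=> hS; have [F hF] := choice hS.
exists (fun p => match (unpickle p : option (I * nat)) with
   | Some (i, n) => F i n | None => set0 end); split.
  move=> p; case: (unpickle p) => [[i n]|]; last exact: nd0.
  by case: (hF i) => + _; apply.
move=> x [i _ Six]; case: (hF i) => _ /(_ x Six) [n _ Fx].
exists (pickle (i, n)) => //; by rewrite pickleK.
Qed.

Lemma meagreU (T : topologicalType) (A B : set T) : meagre A -> meagre B -> meagre (A `|` B).
Proof.
move=> hA hB; have -> : A `|` B = \bigcup_(b : bool) (if b then A else B).
  apply/seteqP; split=> x; first by case=> h; [exists true|exists false].
  by case; case=> _ h; [left|right].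
by apply: meagre_bigcup; case.
Qed.

Lemma arch {R : realType} (eta : R) n : 0 < eta ->
  exists m, (n <= m)%N /\ (m.+1%:R)^-1 < eta.
Proof.
move=> he; exists (n + Num.trunc (eta^-1))%N; split; first exact: leq_addr.
rewrite invf_plt ?posrE //.
apply: lt_le_trans (truncnS_gt _) _.
by rewrite ler_nat ltnS leq_addl.
Qed.
Lemma invle {R : realType} (n m : nat) : (n <= m)%N -> (m.+1%:R)^-1 <= (n.+1%:R)^-1 :> R.
Proof. by move=> h; rewrite lef_pV2 ?posrE // ler_nat ltnS. Qed.

Definition inv (R : realType) (m : nat) : R := (m.+1%:R)^-1.

Lemma inv_gt0 (R : realType) m : 0 < inv R m.
Proof. by rewrite /inv invr_gt0 ltr0n. Qed.

Lemma dball_open (R : realType) (Y : topologicalType) (rho : Y -> Y -> R)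
  (hr : is_metric rho) (ho : forall A : set Y, open A <-> dopen rho A) c q :
  open (dball rho c q).
Proof.
case: hr => r0 r00 rs rt; apply/ho => z /= hz; exists (q - rho c z).
  by rewrite subr_gt0.
move=> w /= hw; apply: le_lt_trans (rt c z w) _.
by rewrite -ltrBrDl.
Qed.

Definition Ui {R : realType} {Y : Type} (rho : Y -> Y -> R) (e : nat -> Y)
  (j : option (nat * nat)) : set Y :=
  match j with None => setT | Some km => dball rho (e km.1) (inv R km.2) end.

Lemma Ui_open (R : realType) (Y : topologicalType) (rho : Y -> Y -> R)
  (hr : is_metric rho) (ho : forall A : set Y, open A <-> dopen rho A) e j :
  open (Ui rho e j).
Proof. by case: j => [km|]; [apply: dball_open | apply: openT]. Qed.

Definition good {R : realType} {Y : Type} (rho : Y -> Y -> R) (e : nat -> Y)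
  (W : nat -> set Y) (n : nat) (U : set Y) (k m : nat) : Prop :=
  [set z | rho (e k) z <= inv R m] `<=` U `&` W n /\ (n <= m)%N.

Definition Mset {R : realType} {X Y : Type} (d : X -> X -> R) (f : Y -> X) (r : R)
  (rho : Y -> Y -> R) (e : nat -> Y) (W : nat -> set Y) (n : nat) (U : set Y) : set X :=
  [set x | exists k m, good rho e W n U k m /\ thicken d (f @` dball rho (e k) (inv R m)) r x].

Definition Eset {R : realType} {X Y : Type} (d : X -> X -> R) (f : Y -> X) (r : R)
  (rho : Y -> Y -> R) (e : nat -> Y) (W : nat -> set Y) (n : nat) (j : option (nat * nat)) : set X :=
  thicken d (f @` Ui rho e j) r `\` Mset d f r rho e W n (Ui rho e j).

Lemma E_nd (R : realType) (X Y : topologicalType) (d : X -> X -> R)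
  (dm : is_metric d) (rho : Y -> Y -> R)
  (hr : is_metric rho) (ho : forall A : set Y, open A <-> dopen rho A)
  (e : nat -> Y) (he : forall O : set Y, open O -> O !=set0 -> exists k, O (e k))
  (f : Y -> X) (fc : continuous f)
  (hU : forall (U : set Y) (e : R), open U -> 0 < e -> open (thicken d (f @` U) e))
  (hV : forall (V : set X) (e : R), open V -> 0 < e -> open (thicken d V e))
  (W : nat -> set Y) (Wo : forall n, open (W n)) (Wd : forall n, dense (W n))
  (r : R) (r0 : 0 < r) n j :
  nowhere_dense (Eset d f r rho e W n j).
Proof.
have hr' := hr; case: hr' => rr0 rr00 rrs rrt.
case: dm => d0 d00 ds dt.
apply: nd_diff.
  rewrite openE => x [k [m [gk hx]]].
  have oT : open (thicken d (f @` dball rho (e k) (inv R m)) r).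
    by apply: hU => //; apply: dball_open.
  rewrite /interior; apply: (filterS _ (open_nbhs_nbhs (conj oT hx))).
  by move=> w hw; exists k, m.
move=> N oN [x [Nx [b [u Uu <-] hxb]]].
pose P := Ui rho e j `&` f @^-1` (thicken d N r).
have oP : open P.
  apply: openI; first exact: Ui_open.
  by apply: open_comp; [move=> z _; apply: fc | apply: hV].
have [y [[Uy [x' Nx' hyx']] Wy]] : P `&` W n !=set0.
  apply: Wd => //; exists u; split => //; exists x => //; by rewrite ds.
have oUW : open (Ui rho e j `&` W n) by apply: openI; [apply: Ui_open|].
have [del del0 hdel] := (proj1 (ho _) oUW) y (conj Uy Wy).
have [m [nm hm]] := arch (del / 2) n (divr_gt0 del0 (ltr0n R 2)).
have [k hk] : exists k, dball rho y (inv R m) (e k).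
  apply: he; first exact: dball_open.
  by exists y; rewrite /dball /= (proj2 (rr00 y y) erefl) inv_gt0.
exists x'; split => //; exists k, m; split.
  split => // z /= hz; apply: hdel; rewrite /dball /=.
  apply: le_lt_trans (rrt y (e k) z) _.
  rewrite (splitr del); apply: ltr_leD; last exact: le_trans hz (ltW hm).
  exact: lt_trans hk hm.
exists (f y); first by exists y => //; rewrite /dball /= rrs.
by rewrite ds.
Qed.

Lemma main_incl (R : realType) (X Y : topologicalType) (d : X -> X -> R)
  (dcl : forall r : R, closed [set p : X * X | d p.1 p.2 <= r])
  (rho : Y -> Y -> R)
  (hr : is_metric rho) (ho : forall A : set Y, open A <-> dopen rho A)
  (hc : forall u : nat -> Y, dcauchy rho u -> dconverges rho u)
  (e : nat -> Y) (f : Y -> X) (fc : continuous f)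
  (W : nat -> set Y) (A : set Y) (WA : forall z, (forall n, W n z) -> A z)
  (r : R) (r0 : 0 < r) (x : X) :
  thicken d (f @` setT) r x -> (forall n j, ~ Eset d f r rho e W n j x) ->
  thicken d (f @` A) (r + r) x.
Proof.
have hr' := hr; case: hr' => rr0 rr00 rrs rrt.
move=> hx0 hE.
have hE' : forall n j, thicken d (f @` Ui rho e j) r x -> Mset d f r rho e W n (Ui rho e j) x.
  move=> n j h; apply: contrapT => hM; apply: (hE n j); by split.
have hex : forall p : nat * option (nat * nat), exists km : nat * nat,
   thicken d (f @` Ui rho e p.2) r x ->
     good rho e W p.1 (Ui rho e p.2) km.1 km.2 /\
     thicken d (f @` dball rho (e km.1) (inv R km.2)) r x.
  move=> [n j]; case: (pselect (thicken d (f @` Ui rho e j) r x)) => h.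
    by have [k [m hkm]] := hE' n j h; exists (k, m).
  by exists (0, 0)%N.
have [g hg] := choice hex.
pose s := fix s n := if n is p.+1 then Some (g (p, s p)) else None.
have Ts : forall n, thicken d (f @` Ui rho e (s n)) r x.
  elim=> [|n IH] //=; exact: (hg (n, s n) IH).2.
have Gs : forall n, good rho e W n (Ui rho e (s n)) (g (n, s n)).1 (g (n, s n)).2.
  by move=> n; exact: (hg (n, s n) (Ts n)).1.
have hey : forall n, exists y, Ui rho e (s n) y /\ d x (f y) < r.
  by move=> n; have [b [y hy <-] hb] := Ts n; exists y.
have [y hy] := choice hey.
have nest : forall n p, (n <= p)%N -> Ui rho e (s p) `<=` Ui rho e (s n).
  move=> n p; elim: p => [|p IH]; first by rewrite leqn0 => /eqP ->.
  rewrite leq_eqVlt => /orP [/eqP -> //|]; rewrite ltnS => np z hz.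
  apply: IH => //; have [sub _] := Gs p.
  by apply: (sub z _).1; apply: ltW.
pose c n := e (g (n, s n)).1.
pose mm n := (g (n, s n)).2.
have ymem : forall n p, (n < p)%N -> rho (c n) (y p) <= inv R (mm n).
  move=> n p np; exact: ltW (nest n.+1 p np _ (hy p).1).
have mmn : forall n, (n <= mm n)%N by move=> n; exact: (Gs n).2.
have cy : dcauchy rho y.
  move=> eps eps0.
  have [n [_ hn]] := arch (eps / 2) 0 (divr_gt0 eps0 (ltr0n R 2)).
  exists n.+1 => p q hp hq.
  apply: le_lt_trans (rrt (y p) (c n) (y q)) _.
  rewrite (splitr eps) rrs.
  have h1 : inv R (mm n) < eps / 2.
    by apply: le_lt_trans hn; apply: invle.
  by apply: ltr_leD; [apply: le_lt_trans h1; apply: ymem | apply: ltW; apply: le_lt_trans h1; apply: ymem].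
have [z hz] := hc y cy.
have zW : forall n, W n z.
  move=> n; have [sub _] := Gs n; apply: (sub z _).2.
  apply/ler_addgt0Pr => eta eta0.
  have [N hN] := hz eta eta0.
  apply: le_trans (rrt (c n) (y (maxn N n.+1)) z) _.
  apply: lerD; first by apply: ymem; rewrite leq_max ltnSn orbT.
  by apply: ltW; apply: hN; rewrite leq_max leqnn.
have Az := WA z zW.
have yz : y n @[n --> \oo] --> z.
  move=> B; rewrite nbhsE; case=> Oo1 [oO Oz] OB.
  have [del del0 hdel] := (proj1 (ho Oo1) oO) z Oz.
  have [N hN] := hz del del0.
  exists N => // p hp; apply: OB; apply: hdel; rewrite /dball /= rrs; exact: hN.
have fyz : (f \o y) n @[n --> \oo] --> f z := cvg_comp _ _ yz (fc z).
have pc : (x, (f \o y) p) @[p --> \oo] --> (x, f z).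
  by apply: cvg_pair => //; apply: cvg_cst.
have hl : [set p : X * X | d p.1 p.2 <= r] (x, f z).
  apply: (closed_cvg _ (dcl r) _ _ pc); apply: nearW => n /=; exact: ltW (hy n).2.
exists (f z); first by exists z.
by apply: le_lt_trans hl _; rewrite ltrDl.
Qed.

Theorem theorem5p2 (R : realType) (X Y : topologicalType) (d : X -> X -> R)
  (hX : topometric d) (pX : polish R X) (pY : polish R Y)
  (f : Y -> X) (fc : continuous f) (fd : dense (range f))
  (hU : forall (U : set Y) (e : R), open U -> 0 < e -> open (thicken d (f @` U) e))
  (hV : forall (V : set X) (e : R), open V -> 0 < e -> open (thicken d V e))
  (A : set Y) :
  comeagre A -> comeagre (dclosure d (f @` A)).
Proof.
case: hX => dm dop dcl.
have dm' := dm; case: dm' => d0 d00 ds dt.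
case: pY => -[D [cD dD]] [rho [hr ho hc]].
case: (pselect (exists y : Y, True)) => [[y0 _]|Yn]; last first.
  exists (fun _ => set0); split; first by move=> _; apply: nd0.
  move=> x _; exfalso.
  have [w [_ [y _ _]]] := fd setT (ex_intro _ x I) openT.
  by apply: Yn; exists y.
have [inj hinj] := (elimT (countable_injP D)) cD.
have hex : forall n, exists y, (exists z, D z /\ inj z = n) -> D y /\ inj y = n.
  move=> n; case: (pselect (exists z, D z /\ inj z = n)) => h.
    by have [z hz] := h; exists z.
  by exists y0.
have [e he0] := choice hex.
have he : forall Ow1 : set Y, open Ow1 -> Ow1 !=set0 -> exists k, Ow1 (e k).
  move=> Ow1 oO nO; have [z [Oz Dz]] := dD Ow1 nO oO.
  exists (inj z); have [De ie] := he0 (inj z) (ex_intro _ z (conj Dz erefl)).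
  by rewrite (hinj (e (inj z)) z) // inE.
case=> F [hF AF].
pose W n := ~` closure (F n).
have Wo : forall n, open (W n) by move=> n; rewrite /W openC; exact: closed_closure.
have Wd : forall n, dense (W n).
  move=> n Ow1 [w1 Oo] oO; apply: contrapT => hn.
  have : interior (closure (F n)) w1.
    rewrite /interior /=; apply: filterS (open_nbhs_nbhs (conj oO Oo)) => w Ow.
    by apply: contrapT => cw; apply: hn; exists w.
  by rewrite (hF n).
have WA : forall z, (forall n, W n z) -> A z.
  move=> z hz; apply: contrapT => nA; have [n _ Fz] := AF z nA.
  by apply: (hz n); apply: subset_closure.
apply: (@meagre_sub _ _ (\bigcup_k ~` thicken d (f @` A) (inv R k))).
  move=> x hx; apply: contrapT => hn; apply: hx => eps eps0.
  have [k [_ hk]] := arch eps 0 eps0.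
  have : thicken d (f @` A) (inv R k) x.
    by apply: contrapT => h; apply: hn; exists k.
  by case=> b Ab hb; exists b => //; apply: lt_trans hk.
apply: meagre_bigcup => k.
pose r := inv R k / 2.
have r0 : 0 < r by rewrite /r divr_gt0 // inv_gt0.
rewrite (splitr (inv R k)) -/r.
apply: (@meagre_sub _ _ (~` thicken d (f @` setT) r `|`
   \bigcup_(p : nat * option (nat * nat)) Eset d f r rho e W p.1 p.2)).
  move=> x hx; apply: contrapT => hn; apply: hx.
  apply: (main_incl _ _ _ _ dcl _ hr ho hc e f fc W A WA r r0 x).
    by apply: contrapT => h; apply: hn; left.
  by move=> n j hE; apply: hn; right; exists (n, j).
apply: meagreU.
  apply: meagre_nd; rewrite -setTD; apply: nd_diff; first by apply: hU => //; exact: openT.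
  move=> N oN [w [Nw _]].
  have [v [Nv [y _ fy]]] := fd N (ex_intro _ w Nw) oN.
  exists v; split => //; exists v; first by exists y.
  by rewrite (proj2 (d00 v v) erefl).
apply: meagre_bigcup => -[n j]; apply: meagre_nd; exact: E_nd.
Qed.
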